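(* Let $f:\mathbb{Z}^n\to\mathbb{R}\cup\{+\infty\}$ be an M-convex function with bounded $\operatorname{dom} f$, and let $x\in\operatorname{dom} f$ with $\phi(x)<0$. Consider the procedure M-IncSlope$(x)$: set $y:=x$; then for each $i\in N$ (each taken exactly once, in an arbitrary order) and, for this $i$, for each $j\in N\setminus\{i\}$ (each taken exactly once, in an arbitrary order), if $f'(y;i,j)=\phi(x)$ then replace $y$ by $y+\bar c(y;i,j)(\chi_i-\chi_j)$; finally output $x':=y$. Then, for every choice of the orders, the output satisfies $\phi(x')>\phi(x)$.
   Context: $N=\{1,\dots,n\}$; $\chi_i\in\{0,1\}^n$ is the $i$-th unit vector. For $f:\mathbb{Z}^n\to\mathbb{R}\cup\{+\infty\}$, $\operatorname{dom} f=\{x\in\mathbb{Z}^n: f(x)<+\infty\}$. $f$ is M-convex if $\operatorname{dom} f\neq\emptyset$ and for all $x,y\in\operatorname{dom} f$ and every $i$ with $x(i)>y(i)$ there is $j$ with $x(j)<y(j)$ such that $f(x)+f(y)\ge f(x-\chi_i+\chi_j)+f(y+\chi_i-\chi_j)$. For $x\in\operatorname{dom} f$ and $i,j\in N$, $f'(x;i,j)=f(x+\chi_i-\chi_j)-f(x)$ (possibly $+\infty$; $f'(x;i,i)=0$), and $\phi(x)=\min_{i,j\in N}f'(x;i,j)$. For $y\in\operatorname{dom} f$ and $i,j$ with $f'(y;i,j)$ finite, the step length is $\bar c(y;i,j)=\max\{\lambda\in\mathbb{Z}_{\ge 0}: f(y+\lambda(\chi_i-\chi_j))-f(y)=\lambda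 f'(y;i,j)\}$ (finite since $\operatorname{dom} f$ is bounded). *)

(* Defs.v *)
From HB Require Import structures.
From mathcomp Require Import all_boot all_order all_algebra.
From mathcomp Require Import all_classical all_reals ereal.
Set Implicit Arguments. Unset Strict Implicit. Unset Printing Implicit Defensive.
Import Order.TTheory GRing.Theory Num.Theory.
Local Open Scope ring_scope.
Local Open Scope ereal_scope.

(* Points of Z^n are functions 'I_n -> int; N = 'I_n. *)
Definition pt (n : nat) := 'I_n -> int.

Definition chi {n : nat} (i : 'I_n) : pt n := fun k => ((k == i) : nat)%:Z.

Definition move {n : nat} (x : pt n) (lam : int) (i j : 'I_n) : pt n :=
  fun k => (x k + lam * (chi i k - chi j k))%R.

Section Mconv.
Variables (R : realType) (n : nat) (f : pt n -> \bar R).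

Definition dom (x : pt n) : Prop := f x < +oo.

Definition Mconvex : Prop :=
  (exists x, dom x) /\
  forall x y : pt n, dom x -> dom y -> forall i : 'I_n, (y i < x i)%R ->
    exists j : 'I_n, (x j < y j)%R /\
      f (move x (-1) i j) + f (move y 1 i j) <= f x + f y.

Definition dom_bounded : Prop :=
  exists B : int, forall x : pt n, dom x -> forall k, (`|x k| <= B)%R.

Definition fder (x : pt n) (i j : 'I_n) : \bar R := f (move x 1 i j) - f x.

Definition phi (x : pt n) : \bar R :=
  \big[Order.min/+oo]_(i < n) \big[Order.min/+oo]_(j < n) fder x i j.

Definition lin_step (y : pt n) (i j : 'I_n) (lam : nat) : Prop :=
  f (move y lam%:Z i j) - f y = (lam%:R)%:E * fder y i j.

(* step length: the maximum such lambda (exists when dom f is bounded and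
   f'(y;i,j) is finite); chosen by classical description. *)
Definition cbar (y : pt n) (i j : 'I_n) : nat :=
  xget 0%N (fun c => lin_step y i j c /\ forall l, lin_step y i j l -> (l <= c)%N).

Definition incstep (phix : \bar R) (y : pt n) (ij : 'I_n * 'I_n) : pt n :=
  if fder y ij.1 ij.2 == phix then move y (cbar y ij.1 ij.2)%:Z ij.1 ij.2 else y.

(* M-IncSlope(x) with outer order sigma on N and, for each i, inner order
   tau i on N \ {i}. *)
Definition M_IncSlope (x : pt n) (sigma : seq 'I_n) (tau : 'I_n -> seq 'I_n) : pt n :=
  foldl (incstep (phi x)) x [seq (i, j) | i <- sigma, j <- tau i].

End Mconv.

(* Main.v *)
Require Import Defs.
From HB Require Import structures.
From mathcomp Require Import all_boot all_order all_algebra.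
From mathcomp Require Import all_classical all_reals ereal.
From mathcomp Require Import lra ring zify.
Set Implicit Arguments. Unset Strict Implicit. Unset Printing Implicit Defensive.
Import Order.TTheory GRing.Theory Num.Theory.
Local Open Scope ring_scope.
Local Open Scope ereal_scope.
Lemma arL2 (R : realType) (a rz : R) (A B W : \bar R) :
  A != -oo -> B != -oo -> W != -oo ->
  A + B <= W + rz%:E -> a%:E <= B - rz%:E -> A - rz%:E <= W - (rz + a)%:E.
Proof.
case: A => [x| |]; case: B => [y| |]; case: W => [w| |] //= _ _ _.
all: rewrite -?EFinD -?EFinB ?lee_fin //.
- move=> *; lra.
all: by move=> *; rewrite addye // leey.
Qed.

Lemma arL3 (R : realType) (a rz : R) (W : \bar R) :
  (a < 0)%R -> W != -oo -> a%:E <= W - rz%:E -> a%:E < W - (rz + a)%:E.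
Proof.
case: W => [w| |] //= ha _.
rewrite -?EFinD -?EFinB ?lee_fin ?lte_fin; lra.
Qed.

Lemma arL4 (R : realType) (a rz : R) : (a < 0)%R -> a%:E < rz%:E - (rz + a)%:E.
Proof. move=> ha; rewrite -EFinB lte_fin; lra. Qed.

Lemma chiE n (i k : 'I_n) : chi i k = ((k == i) : nat)%:Z.
Proof. by []. Qed.

Lemma moveE n (z : pt n) lam (i j k : 'I_n) :
  move z lam i j k = (z k + lam * (chi i k - chi j k))%R.
Proof. by []. Qed.

Lemma fin_sum (R : realType) (A B C D : \bar R) : A != -oo -> B != -oo ->
  C < +oo -> D < +oo -> A + B <= C + D -> A < +oo /\ B < +oo.
Proof.
case: A => [x| |]; case: B => [y| |]; case: C => [z| |]; case: D => [w| |] //=;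
  by rewrite ?ltey.
Qed.

Lemma cvx_real (R : realType) (r : nat -> R) (c t : nat) :
  (forall u, (u.+2 <= c)%N -> (r u.+1 + r u.+1 <= r u + r u.+2)%R) ->
  (t < c)%N -> (r t < r t.+1)%R -> (r t < r c)%R.
Proof.
move=> hcv htc h0.
have P : forall m, (t + m < c)%N -> (r (t + m)%N < r (t + m)%N.+1)%R /\ (r t < r (t + m)%N.+1)%R.
  elim=> [|m IH] hm; first by rewrite addn0; split.
  have [h1 h2] := IH ltac:(lia).
  have h3 := hcv (t + m)%N ltac:(lia); rewrite addnS.
  split; lra.
have := (P (c - t.+1)%N ltac:(lia)).2; rewrite (_ : (t + (c - t.+1))%N.+1 = c) //; lia.
Qed.

Lemma ex_max_nat (P : nat -> Prop) (N : nat) : P 0%N -> (forall m, P m -> (m <= N)%N) ->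
  exists c, P c /\ forall m, P m -> (m <= c)%N.
Proof.
elim: N => [|N IH] h0 hb.
  exists 0%N; split => // m /hb; by [].
have [hN|hN] := pselect (P N.+1).
  by exists N.+1.
apply: IH => // m hm; have := hb m hm; rewrite leq_eqVlt => /orP[/eqP em|//].
by subst m.
Qed.

Section S.
Variables (R : realType) (n : nat) (f : pt n -> \bar R).
Hypothesis f_noninf : forall x, f x != -oo.
Hypothesis hM : Mconvex f.

Lemma unit_core (a rz : R) (z : pt n) (k l : 'I_n) :
  (a < 0)%R -> f z = rz%:E -> (forall i j, a%:E <= fder f z i j) ->
  fder f z k l = a%:E ->
  [/\ f (move z 1 k l) = (rz + a)%:E,
      (forall i, a%:E < fder f (move z 1 k l) i k) &
      (forall i j, i != j -> j != k ->
         fder f z i j <= fder f (move z 1 k l) i j \/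
         (fder f z i l <= fder f (move z 1 k l) i j /\
          fder f z k j <= fder f (move z 1 k l) i j))].
Proof.
move=> ha fz hge hkl.
set z' := move z 1 k l.
have fz' : f z' = (rz + a)%:E.
  move: hkl; rewrite /fder -/z' fz.
  have := f_noninf z'; case: (f z') => [w| |] //= _.
  by move=> [] <-; congr EFin; ring.
have hkl' : k != l.
  apply/eqP => ekl; move: hkl; rewrite ekl /fder.
  have -> : move z 1 l l = z by apply/funext => m; rewrite moveE; ring.
  rewrite fz subee // => -[] h; lra.
split => //.
  move=> i; rewrite /fder fz'.
  have -> : move z' 1 i k = move z 1 i l by apply/funext => m; rewrite /z' !moveE; ring.
  apply: arL3 => //.
  by have := hge i l; rewrite /fder fz.
move=> i j hij hjk.
set W := f (move z' 1 i j).
have [Winf|Wfin] := eqVneq W +oo.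
  by left; rewrite /fder -/W Winf fz' addye // leey.
have domX : dom f (move z' 1 i j) by rewrite /dom -/W ltey.
have domY : dom f z by rewrite /dom fz ltey.
have hk : (z k < move z' 1 i j k)%R.
  have e1 : (k == j) = false by rewrite eq_sym (negbTE hjk).
  rewrite /z' !moveE !chiE eqxx e1 (negbTE hkl').
  case: (k == i) => /=; lia.
have [j' [hj' hex]] := hM.2 _ _ domX domY k hk.
have hj'2 : j' = l \/ j' = j.
  case: (eqVneq j' l) => [->|njl]; first by left.
  case: (eqVneq j' j) => [->|njj]; first by right.
  move: hj'; rewrite /z' !moveE !chiE (negbTE njl) (negbTE njj).
  case: (j' == k); case: (j' == i) => /=; lia.
case: hj'2 => ej'; subst j'.
  left.
  have e1 : move (move z' 1 i j) (-1) k l = move z 1 i j.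
    by apply/funext => m; rewrite /z' !moveE; ring.
  have e2 : move z 1 k l = z' by [].
  rewrite e1 e2 fz' in hex.
  rewrite /fder -/W fz' fz.
  apply: (arL2 (B := (rz + a)%:E)) => //; first exact: f_noninf.
    by rewrite -fz.
  have -> : (rz + a)%:E - rz%:E = a%:E by rewrite -EFinN -EFinD; congr EFin; ring.
  by [].
right.
have e1 : move (move z' 1 i j) (-1) k j = move z 1 i l.
  by apply/funext => m; rewrite /z' !moveE; ring.
rewrite e1 in hex.
rewrite /fder -/W fz' fz; split.
  apply: (@arL2 _ a rz (f (move z 1 i l)) (f (move z 1 k j)) W (f_noninf _) (f_noninf _) (f_noninf _)).
    by rewrite -fz.
  by have := hge k j; rewrite /fder fz.
apply: (@arL2 _ a rz (f (move z 1 k j)) (f (move z 1 i l)) W (f_noninf _) (f_noninf _) (f_noninf _)).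
  by rewrite -fz addeC.
by have := hge i l; rewrite /fder fz.
Qed.

Lemma fder_ii (z : pt n) (rz : R) (i : 'I_n) : f z = rz%:E -> fder f z i i = 0.
Proof.
move=> fz; rewrite /fder.
have -> : move z 1 i i = z by apply/funext => m; rewrite moveE; ring.
by rewrite fz subee.
Qed.

Lemma unit_all (a rz : R) (z : pt n) (k l : 'I_n) :
  (a < 0)%R -> f z = rz%:E -> (forall i j, a%:E <= fder f z i j) ->
  fder f z k l = a%:E ->
  [/\ f (move z 1 k l) = (rz + a)%:E,
      (forall i j, a%:E <= fder f (move z 1 k l) i j),
      (forall i, i != k -> (forall j, j != i -> a%:E < fder f z i j) ->
          forall j, j != i -> a%:E < fder f (move z 1 k l) i j) &
      (forall j, j != l -> fder f z k j <= fder f (move z 1 k l) k j)].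
Proof.
move=> ha fz hge hkl.
have [fz' h2 h3] := unit_core ha fz hge hkl.
split => //.
- move=> i j.
  have [->|njk] := eqVneq j k; first exact: ltW.
  have [->|nij] := eqVneq i j.
    by rewrite (fder_ii _ fz') lee_fin; apply: ltW.
  case: (h3 i j nij njk) => [h|[_ h]]; exact: le_trans (hge _ _) h.
- move=> i nik H j nji.
  have [->|njk] := eqVneq j k; first exact: h2.
  have nij : i != j by rewrite eq_sym.
  case: (h3 i j nij njk) => [h|[h _]]; apply: lt_le_trans h; first exact: H.
  have [eli|nli] := eqVneq l i.
    by rewrite eli (fder_ii _ fz) lte_fin.
  exact: (H l nli).
- move=> j njl.
  have [->|njk] := eqVneq j k.
    by rewrite (fder_ii _ fz) (fder_ii _ fz').
  have nkj : k != j by rewrite eq_sym.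
  by case: (h3 k j nkj njk) => [|[_ h]].
Qed.

Lemma move_succ (y : pt n) (t : nat) (k l : 'I_n) :
  move (move y t%:Z k l) 1 k l = move y t.+1%:Z k l.
Proof. apply/funext => m; rewrite !moveE -addn1 PoszD; ring. Qed.

Lemma move0 (y : pt n) (k l : 'I_n) : move y 0 k l = y.
Proof. apply/funext => m; rewrite !moveE; ring. Qed.

Lemma chord (y : pt n) (k l : 'I_n) (u v : nat) : k != l -> (u <= v)%N ->
  dom f (move y u%:Z k l) -> dom f (move y (v.+2)%:Z k l) ->
  f (move y u.+1%:Z k l) + f (move y v.+1%:Z k l) <=
  f (move y u%:Z k l) + f (move y v.+2%:Z k l).
Proof.
move=> nkl uv du dv.
have hk : (move y u%:Z k l k < move y v.+2%:Z k l k)%R.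
  rewrite !moveE !chiE eqxx (negbTE nkl) /=; lia.
have [j [hj hex]] := hM.2 _ _ dv du k hk.
have ejl : j = l.
  apply/eqP; apply: contraLR hj => njl.
  rewrite !moveE !chiE (negbTE njl); case: (j == k) => /=; lia.
subst j.
have e1 : move (move y v.+2%:Z k l) (-1) k l = move y v.+1%:Z k l.
  by apply/funext => m; rewrite !moveE -(addn1 v.+1) PoszD; ring.
have e2 : move (move y u%:Z k l) 1 k l = move y u.+1%:Z k l by exact: move_succ.
by rewrite e1 e2 addeC [X in _ <= X]addeC in hex.
Qed.


Lemma fin_line (y : pt n) (k l : 'I_n) (c : nat) : k != l ->
  dom f (move y 0%:Z k l) -> dom f (move y c%:Z k l) ->
  forall t, (t <= c)%N -> dom f (move y t%:Z k l).
Proof.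
move=> nkl d0 dc.
have Q : forall m, (2 * m <= c)%N ->
    dom f (move y m%:Z k l) /\ dom f (move y (c - m)%:Z k l).
  elim=> [|m IH] hm; first by rewrite subn0.
  have [IH1 IH2] := IH ltac:(lia).
  set v := (c - m.+2)%N.
  have e1 : (c - m)%N = v.+2 by rewrite /v; lia.
  have e2 : (c - m.+1)%N = v.+1 by rewrite /v; lia.
  rewrite e1 in IH2; rewrite e2.
  have hc := chord nkl (_ : (m <= v)%N) IH1 IH2.
  apply: (fin_sum (f_noninf _) (f_noninf _) IH1 IH2); apply: hc; rewrite /v; lia.
move=> t ht.
have [h|h] := leqP (2 * t) c; first exact: (Q t h).1.
have := (Q (c - t)%N ltac:(lia)).2; rewrite (_ : (c - (c - t))%N = t) //; lia.
Qed.


Lemma cbar_spec (a ry : R) (y : pt n) (k l : 'I_n) : (a < 0)%R -> dom_bounded f ->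
  f y = ry%:E -> fder f y k l = a%:E ->
  lin_step f y k l (cbar f y k l) /\
  forall m, lin_step f y k l m -> (m <= cbar f y k l)%N.
Proof.
move=> ha [B hB] fy hkl.
have nkl : k != l.
  apply/eqP => ekl; move: hkl; rewrite ekl (fder_ii _ fy) => -[] h; lra.
rewrite /cbar. apply: (@xgetPex _ 0%N (fun c => lin_step f y k l c /\ forall m, lin_step f y k l m -> (m <= c)%N)).
apply: (ex_max_nat (N := (absz B * 2)%N)).
  by rewrite /lin_step move0 fy subee // mul0e.
move=> m; rewrite /lin_step hkl fy.
move=> hm.
have dm : dom f (move y m%:Z k l).
  move: hm; rewrite /dom; have := f_noninf (move y m%:Z k l).
  by case: (f (move y m%:Z k l)) => [w| |] //= _ _; rewrite ltey.
have dy : dom f y by rewrite /dom fy ltey.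
have := hB _ dm k; have := hB _ dy k.
rewrite moveE !chiE eqxx (negbTE nkl) /= !ler_norml.
lia.
Qed.


Lemma move0' (y : pt n) (k l : 'I_n) : move y (Posz 0) k l = y.
Proof. apply/funext => m; rewrite !moveE; ring. Qed.

Lemma dom_fin (z : pt n) : dom f z -> (fine (f z))%:E = f z.
Proof.
rewrite /dom => hz; apply: fineK; rewrite fin_numE f_noninf /=.
by rewrite lt_neqAle in hz; case/andP: hz.
Qed.

Lemma natS (u : nat) : (u.+1%:R = u%:R + 1 :> R)%R.
Proof. by rewrite -addn1 natrD. Qed.

Lemma long_step (a ry : R) (y : pt n) (k l : 'I_n) : (a < 0)%R -> dom_bounded f ->
  f y = ry%:E -> (forall i j, a%:E <= fder f y i j) -> fder f y k l = a%:E ->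
  let y' := move y (cbar f y k l)%:Z k l in
  [/\ exists ry', f y' = ry'%:E,
      (forall i j, a%:E <= fder f y' i j),
      (forall i, i != k -> (forall j, j != i -> a%:E < fder f y i j) ->
          forall j, j != i -> a%:E < fder f y' i j),
      (forall j, j != l -> fder f y k j <= fder f y' k j) &
      a%:E < fder f y' k l].
Proof.
move=> ha hb fy hge hkl y'.
have [lc cmax] := cbar_spec ha hb fy hkl.
set c := cbar f y k l.
have nkl : k != l.
  apply/eqP => ekl; move: hkl; rewrite ekl (fder_ii _ fy) => -[] h; lra.
have fc : f (move y c%:Z k l) = (ry + c%:R * a)%:E.
  move: lc; rewrite /lin_step hkl fy.
  have := f_noninf (move y c%:Z k l); case: (f (move y c%:Z k l)) => [w| |] //= _.
  by move=> [] <-; congr EFin; ring.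
have dl : forall t, (t <= c)%N -> dom f (move y t%:Z k l).
  apply: fin_line => //; first by rewrite move0' /dom fy ltey.
  by rewrite /dom fc ltey.
pose r t := (fine (f (move y t%:Z k l)) - t%:R * a)%R.
have rc : r c = ry by rewrite /r fc /=; ring.
have hcv : forall u, (u.+2 <= c)%N -> (r u.+1 + r u.+1 <= r u + r u.+2)%R.
  move=> u hu.
  have h := chord nkl (leqnn u) (dl u ltac:(lia)) (dl u.+2 hu).
  rewrite -(dom_fin (dl u ltac:(lia))) -(dom_fin (dl u.+1 ltac:(lia))) in h.
  rewrite -(dom_fin (dl u.+2 hu)) -!EFinD lee_fin in h.
  rewrite /r !natS; lra.
pose J t := [/\ f (move y t%:Z k l) = (ry + t%:R * a)%:E,
      (forall i j, a%:E <= fder f (move y t%:Z k l) i j),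
      (forall i, i != k -> (forall j, j != i -> a%:E < fder f y i j) ->
          forall j, j != i -> a%:E < fder f (move y t%:Z k l) i j) &
      (forall j, j != l -> fder f y k j <= fder f (move y t%:Z k l) k j)].
have J0 : J 0%N.
  rewrite /J move0' fy mul0r addr0; split => // i _ H //.
have Jstep : forall t, (t < c)%N -> J t -> J t.+1.
  move=> t htc [ft gt ht kt].
  have hkt : fder f (move y t%:Z k l) k l = a%:E.
    apply/eqP; apply: contraT => hne.
    have hlt : a%:E < fder f (move y t%:Z k l) k l by rewrite lt_neqAle eq_sym hne gt.
    move: hlt; rewrite /fder move_succ ft -(dom_fin (dl t.+1 htc)) -EFinB lte_fin => hlt.
    have : (r t < r t.+1)%R by rewrite /r ft /= natS; lra.
    move=> /(cvx_real hcv htc); rewrite rc /r ft /=; lra.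
  have [f1 g1 h1 k1] := unit_all ha ft gt hkt.
  rewrite move_succ in f1 g1 h1 k1.
  split => //.
  - by rewrite f1 natS; congr EFin; ring.
  - by move=> i nik H; apply: h1 => //; apply: ht.
  - by move=> j njl; apply: le_trans (kt j njl) (k1 j njl).
have Jall : forall t, (t <= c)%N -> J t.
  elim=> [|t IH] ht //; apply: Jstep => //; apply: IH; lia.
have [fC gC hC kC] := Jall c (leqnn c).
split => //.
- by exists (ry + c%:R * a)%R.
rewrite lt_neqAle gC andbT; apply/negP => /eqP heq.
have [f1 _ _ _] := unit_all ha fC gC (esym heq).
rewrite move_succ in f1.
have : lin_step f y k l c.+1.
  by rewrite /lin_step f1 fy hkl -EFinB -EFinM natS; congr EFin; ring.
by move=> /cmax; rewrite ltnn.
Qed.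


Definition Inv (a : R) (S : seq 'I_n) (y : pt n) :=
  [/\ exists ry, f y = ry%:E,
      (forall i j, a%:E <= fder f y i j) &
      (forall i, i \in S -> forall j, j != i -> a%:E < fder f y i j)].

Lemma one_step (a : R) (S : seq 'I_n) (T : seq 'I_n) (y : pt n) (i j0 : 'I_n) :
  (a < 0)%R -> dom_bounded f -> Inv a S y ->
  (forall j, j \in T -> j != i -> a%:E < fder f y i j) ->
  let y1 := incstep f a%:E y (i, j0) in
  Inv a S y1 /\ (forall j, j \in j0 :: T -> j != i -> a%:E < fder f y1 i j).
Proof.
move=> ha hb [[ry fy] hge hS] hT y1.
rewrite /y1 /incstep /=.
case: eqP => [heq|hne].
  have [ex g h kk lt] := long_step ha hb fy hge heq.
  have nij0 : j0 != i.
    apply/eqP => e; move: heq; rewrite e (fder_ii _ fy) => -[] h'; lra.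
  split; first split => //.
    move=> i' hi' j nji'.
    have [ei|nei] := eqVneq i' i.
      subst i'; have := hS i hi' j0 nij0; rewrite heq ltxx; by [].
    by apply: h => // j' nj'; apply: hS.
  move=> j; rewrite inE => /orP[/eqP ->|hjT] nji; first exact: lt.
  have [ej|nej] := eqVneq j j0; first by subst j.
  exact: lt_le_trans (hT j hjT nji) (kk j nej).
split; first by split => //; exists ry.
move=> j; rewrite inE => /orP[/eqP ->|hjT] nji; last exact: hT.
by rewrite lt_neqAle eq_sym; apply/andP; split; [apply/eqP|apply: hge].
Qed.

Lemma inner (a : R) (S : seq 'I_n) (i : 'I_n) (L : seq 'I_n) :
  (a < 0)%R -> dom_bounded f ->
  forall T y, Inv a S y ->
  (forall j, j \in T -> j != i -> a%:E < fder f y i j) ->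
  let y' := foldl (incstep f a%:E) y [seq (i, j) | j <- L] in
  Inv a S y' /\ (forall j, j \in T ++ L -> j != i -> a%:E < fder f y' i j).
Proof.
move=> ha hb; elim: L => [|j0 L IH] T y hI hT /=.
  by split => // j; rewrite cats0; apply: hT.
have [hI1 hT1] := @one_step a S T y i j0 ha hb hI hT.
have [hI2 hT2] := IH _ _ hI1 hT1.
split => // j hj; apply: hT2.
by move: hj; rewrite !mem_cat !inE => /orP[->|/orP[->|->]]; rewrite ?orbT.
Qed.


Lemma outer (a : R) (tau : 'I_n -> seq 'I_n) :
  (a < 0)%R -> dom_bounded f ->
  (forall i j, j != i -> j \in tau i) ->
  forall sig y S, Inv a S y ->
  Inv a (S ++ sig) (foldl (incstep f a%:E) y [seq (i, j) | i <- sig, j <- tau i]).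
Proof.
move=> ha hb htau; elim=> [|i s IH] y S hI /=; first by rewrite cats0.
rewrite foldl_cat.
have [[hex hge hS] hT] := @inner a S i (tau i) ha hb [::] y hI (fun j (hj : j \in [::]) _ => ltac:(by [])).
rewrite -cat_rcons; apply: IH; split => // i' hi' j nji'.
move: hi'; rewrite mem_rcons inE => /orP[/eqP ei|hi']; last exact: hS.
subst i'; exact: (hT j (htau i j nji') nji').
Qed.

End S.

Lemma bigmin_prop (R : realType) (P : \bar R -> Prop) (I : Type) (r : seq I) (F : I -> \bar R) :
  P +oo -> (forall i, P (F i)) -> P (\big[Order.min/+oo]_(i <- r) F i).
Proof.
move=> h0 hF; apply: big_ind => //.
by move=> u v hu hv; rewrite /Order.min; case: ifP.
Qed.

Unset Implicit Arguments.
Set Strict Implicit.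

Theorem mainTheorem4 (R : realType) (n : nat) (f : pt n -> \bar R)
  (f_noninf : forall x, f x != -oo)
  (hM : Mconvex f) (hB : dom_bounded f)
  (x : pt n) (hx : dom f x) (hphi : phi f x < 0)
  (sigma : seq 'I_n) (tau : 'I_n -> seq 'I_n)
  (hsigma : perm_eq sigma (enum 'I_n))
  (htau : forall i : 'I_n, perm_eq (tau i) [seq j <- enum 'I_n | j != i]) :
  phi f x < phi f (M_IncSlope f x sigma tau).
Proof.
have fx : f x = (fine (f x))%:E := esym (dom_fin f_noninf hx).
have phinf : phi f x != -oo.
  rewrite /phi; apply: (bigmin_prop (P := fun v => v != -oo)) => // i.
  apply: (bigmin_prop (P := fun v => v != -oo)) => // j.
  rewrite /fder fx; have := f_noninf (move x 1 i j).
  by case: (f (move x 1 i j)) => [w| |].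
have hpa : phi f x = (fine (phi f x))%:E.
  apply/esym/fineK; rewrite fin_numE phinf /=.
  by apply/eqP => e; move: hphi; rewrite e.
set a := fine (phi f x) in hpa.
have ha : (a < 0)%R by rewrite -lte_fin -hpa.
have hge : forall i j, a%:E <= fder f x i j.
  move=> i j; rewrite -hpa /phi.
  exact: le_trans (bigmin_le _ i _) (bigmin_le _ j _).
have hI : Inv f a [::] x by split => //; exists (fine (f x)).
have htau' : forall i j, j != i -> j \in tau i.
  by move=> i j nji; rewrite (perm_mem (htau i)) mem_filter nji mem_enum.
have [[ry fy] hge' hS] := outer f_noninf hM ha hB htau' sigma hI.
rewrite /M_IncSlope hpa.
set y := foldl _ _ _ in fy hge' hS.
rewrite /phi; apply: (bigmin_prop (P := fun v => a%:E < v)); first exact: ltey.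
move=> i; apply: (bigmin_prop (P := fun v => a%:E < v)); first exact: ltey.
move=> j.
have [eij|nij] := eqVneq j i.
  by subst j; rewrite (fder_ii _ fy) lte_fin.
apply: hS => //.
by rewrite (perm_mem hsigma) mem_enum.
Qed.
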